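(* For $z\in L_T$, $s>0$ and $T>e$, \[P(X(sT)=r(T)z)\ge\exp\Big(-a(T)T\big(q|z|+\mathcal{E}^1_T(s,|z|)\big)\Big).\]
   Context: $X(u)$, $u\ge0$, is a continuous-time simple symmetric random walk on $\mathbb{Z}^d$ started at $0$, jumping to each of its $2d$ neighbours at rate $1$, under a probability measure $P$. $|\cdot|$ is the $\ell_1$-norm. $\alpha>d$, $q=d/(\alpha-d)$, $a(T)=(T/\log T)^q$, $r(T)=(T/\log T)^{q+1}$, $L_T=\{z\in\mathbb{R}^d: r(T)z\in\mathbb{Z}^d\}$. For $s>0$, $R\ge0$: $\mathcal{E}^1_T(s,R)=\frac{R}{\log T}(\log R-\log s)+\frac{2ds}{a(T)}$ (with the convention $0\log 0=0$). *)

(* Defs.v *)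
From HB Require Import structures.
From mathcomp Require Import all_boot all_order all_algebra.
From mathcomp Require Import all_classical all_reals all_analysis.
Set Implicit Arguments. Unset Strict Implicit. Unset Printing Implicit Defensive.
Import Order.TTheory GRing.Theory Num.Theory.
Local Open Scope ring_scope.

Section Defs.
Variable R : realType.

Definition step (d : nat) (st : 'I_d * bool) : {ffun 'I_d -> int} :=
  [ffun j => if st.1 == j then (if st.2 then 1 else -1) else 0].

Definition walk_end (d n : nat) (w : n.-tuple ('I_d * bool)) : {ffun 'I_d -> int} :=
  [ffun j => \sum_(st <- w) step st j].

Definition srw_prob (d n : nat) (x : {ffun 'I_d -> int}) : R :=
  (#|[set w : n.-tuple ('I_d * bool) | walk_end w == x]|)%:R / ((2 * d) ^ n)%:R.

(* Law of the continuous-time simple symmetric random walk X(t) on Z^d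
   started at 0, jumping to each of its 2d neighbours at rate 1:
   P(X(t) = x) = sum_n e^{-2dt} (2dt)^n / n! * P(S_n = x). *)
Definition ctrw_prob (d : nat) (t : R) (x : {ffun 'I_d -> int}) : R :=
  limn (fun N => \sum_(0 <= n < N)
           (expR (- (2 * d%:R * t)) * (2 * d%:R * t) ^+ n / (n`!)%:R
             * srw_prob n x)).

Definition l1 (d : nat) (z : 'I_d -> R) : R := \sum_(i < d) `|z i|.

Definition qexp (d : nat) (alpha : R) : R := d%:R / (alpha - d%:R).
Definition aT (d : nat) (alpha T : R) : R := (T / ln T) `^ (qexp d alpha).
Definition rT (d : nat) (alpha T : R) : R := (T / ln T) `^ (qexp d alpha + 1).

(* E^1_T(s,R) = R/log T (log R - log s) + 2ds/a(T); with ln 0 = 0 in the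
   library, R*(ln R - ln s) = 0 at R = 0, matching 0 log 0 = 0. *)
Definition E1 (d : nat) (alpha T s Rr : R) : R :=
  Rr / ln T * (ln Rr - ln s) + 2 * d%:R * s / aT d alpha T.

End Defs.

(* Main.v *)
Require Import Defs.
From mathcomp Require Import all_boot all_order all_algebra.
From mathcomp Require Import all_classical all_reals all_analysis.
From mathcomp Require Import ring lra.
Import Order.TTheory GRing.Theory Num.Theory numFieldNormedType.Exports.
Set Implicit Arguments. Unset Strict Implicit.
Local Open Scope ring_scope.


Definition pathseq d (k : {ffun 'I_d -> int}) : seq ('I_d * bool) :=
  flatten [seq nseq `|k i|%N (i, (0 <= k i)) | i <- enum 'I_d].

Lemma size_pathseq d (k : {ffun 'I_d -> int}) :
  size (pathseq k) = (\sum_(i < d) `|k i|)%N.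
Proof.
rewrite /pathseq size_flatten /shape -map_comp.
rewrite sumnE big_map /=; rewrite -[RHS]big_enum /=.
by apply: eq_bigr => i _; rewrite /= size_nseq.
Qed.

Lemma sign_abs (x : int) : (if 0 <= x then 1 else -1) *+ `|x|%N = x.
Proof.
case: x => m /=; first by rewrite natz.
rewrite -[Negz m]/(- (m.+1)%:Z) -natz.
by rewrite mulNrn.
Qed.

Lemma walk_pathseq d (k : {ffun 'I_d -> int}) (w : (\sum_(i < d) `|k i|)%N.-tuple ('I_d * bool)) :
  val w = pathseq k -> walk_end w = k.
Proof.
move=> hw; apply/ffunP => j; rewrite ffunE hw /pathseq big_flatten /= big_map.
under eq_bigr => i _ do rewrite big_nseq iter_addr_0.
rewrite big_enum /= (bigD1 j) //= big1 ?addr0.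
  by rewrite /step ffunE /= eqxx sign_abs.
by move=> i hij; rewrite /step ffunE /= (negbTE hij) mul0rn.
Qed.

Lemma srw_lb (R : realType) d (k : {ffun 'I_d -> int}) : (0 < d)%N ->
  ((2 * d) ^ (\sum_(i < d) `|k i|))%:R^-1 <= srw_prob R (\sum_(i < d) `|k i|)%N k.
Proof.
move=> hd; set n := (\sum_(i < d) _)%N.
have hs : size (pathseq k) == n by rewrite size_pathseq.
pose w : n.-tuple ('I_d * bool) := Tuple hs.
have hc : (0 < #|[set w : n.-tuple ('I_d * bool) | walk_end w == k]|)%N.
  by apply/card_gt0P; exists w; rewrite inE walk_pathseq.
rewrite /srw_prob -[X in X <= _]mul1r ler_wpM2r //.
by rewrite ler1n.
Qed.

Lemma srw_ub (R : realType) d n (k : {ffun 'I_d -> int}) :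
  0 <= srw_prob R n k <= 1.
Proof.
rewrite /srw_prob; apply/andP; split; first by rewrite divr_ge0 ?ler0n.
have : (#|[set w : n.-tuple ('I_d * bool) | walk_end w == k]| <= (2 * d) ^ n)%N.
  apply: leq_trans (max_card _) _.
  by rewrite card_tuple card_prod card_ord card_bool mulnC.
case: (posnP ((2 * d) ^ n)) => [->|hp h].
  by rewrite invr0 mulr0.
by rewrite ler_pdivrMr ?ltr0n // mul1r ler_nat.
Qed.

Lemma ctrw_ge (R : realType) d (t : R) (k : {ffun 'I_d -> int}) n : 0 <= t ->
  expR (- (2 * d%:R * t)) * (2 * d%:R * t) ^+ n / (n`!)%:R * srw_prob R n k
  <= ctrw_prob t k.
Proof.
move=> ht.
pose f := fun n : nat => expR (- (2 * d%:R * t)) * (2 * d%:R * t) ^+ n / (n`!)%:R * srw_prob R n k.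
have x0 : 0 <= 2 * d%:R * t by rewrite mulr_ge0 // mulr_ge0.
have f0 : forall n, 0 <= f n.
  move=> m; rewrite /f; case/andP: (srw_ub R m k) => h0 _.
  by rewrite mulr_ge0 // divr_ge0 // mulr_ge0 // ?expR_ge0 // exprn_ge0.
have hnd : {homo series f : n m / (n <= m)%N >-> n <= m}.
  by apply: nondecreasing_series => m _ _; exact: f0.
have hcv : cvgn (series f : R^nat).
  apply: (@series_le_cvg _ f (exp_coeff (2 * d%:R * t))) => //.
    by move=> m; rewrite /exp_coeff /= divr_ge0 // exprn_ge0.
  move=> m; rewrite /f /exp_coeff /=.
  case/andP: (srw_ub R m k) => h0 h1.
  rewrite -[X in _ <= X]mulr1 ler_pM // ?divr_ge0 ?mulr_ge0 ?expR_ge0 ?exprn_ge0 //.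
  rewrite -mulrA -[X in _ <= X]mul1r ler_wpM2r ?divr_ge0 ?exprn_ge0 //.
  by rewrite expR_le1 oppr_le0.
  exact: is_cvg_series_exp_coeff.
apply: le_trans (nondecreasing_cvgn_le hnd hcv n.+1).
rewrite seriesSr -[X in X <= _]add0r lerD2r.
by rewrite /series /=; apply: sumr_ge0 => i _; exact: f0.
Qed.

Lemma fact_le_exp n : (n`! <= n ^ n)%N.
Proof.
elim: n => // n IH; rewrite factS expnS leq_mul //.
apply: leq_trans IH _; case: n => // n; rewrite leq_exp2r //.
Qed.

Lemma main_ineq (R : realType) (d : nat) (alpha T s : R) (n : nat) :
  (0 < d)%N -> d%:R < alpha -> expR 1 < T -> 0 < s ->
  expR (- (aT d alpha T * T * (qexp d alpha * (n%:R / rT d alpha T)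
        + E1 d alpha T s (n%:R / rT d alpha T))))
  <= expR (- (2 * d%:R * (s * T))) * (s * T) ^+ n / (n`!)%:R.
Proof.
move=> hd hal hT hs.
have T0 : 0 < T by apply: lt_trans hT; rewrite expR_gt0.
have hl : 1 < ln T by rewrite -[X in X < _](expRK 1) ltr_ln ?posrE ?expR_gt0.
have l0 : 0 < ln T by lra.
set lT := ln T.
set c := T / lT.
have c0 : 0 < c by rewrite divr_gt0.
set q := qexp d alpha.
have q0 : 0 < q by rewrite /q /qexp divr_gt0 ?ltr0n // subr_gt0.
have a0 : 0 < aT d alpha T by rewrite /aT powR_gt0.
have hr : rT d alpha T = c * aT d alpha T.
  rewrite /rT /aT powRD; last by rewrite (gt_eqF c0) implybT.
  by rewrite powRr1 ?(ltW c0) // mulrC.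
have lr : ln (rT d alpha T) = (q + 1) * (lT - ln lT).
  by rewrite /rT ln_powR /c lnM ?posrE ?invr_gt0 // lnV ?posrE.
have llT : 0 < ln lT by rewrite ln_gt0.
set a := aT d alpha T in a0 hr *.
set t := s * T.
have t0 : 0 < t by rewrite mulr_gt0.
have lt : ln t = ln s + lT by rewrite /t lnM.
rewrite hr /E1 -/a -/lT.
set L := n%:R / (c * a).
have hE : a * T * (q * L + (L / lT * (ln L - ln s) + 2 * d%:R * s / a)) =
          q * n%:R * lT + n%:R * (ln L - ln s) + 2 * d%:R * t.
  rewrite /L /c /t; move: (ln _) => x; field.
  by rewrite !gt_eqF.
rewrite hE.
case: (posnP n) => [n0|np].
  rewrite n0 /= expr0 fact0 mulr1 divr1.
  by rewrite ler_expR mulr0 !mul0r !add0r.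
have nr0 : 0 < (n%:R : R) by rewrite ltr0n.
have lL : ln L = ln n%:R - (q + 1) * (lT - ln lT).
  have r0 : 0 < rT d alpha T by rewrite hr mulr_gt0.
  rewrite /L -hr lnM ?posrE ?invr_gt0 //.
  rewrite lnV ?posrE // lr //.
apply: (@le_trans _ _ (expR (- (2 * d%:R * t)) * (t / n%:R) ^+ n)).
  rewrite -(lnK (_ : (t / n%:R) ^+ n \in Num.pos)); last by rewrite posrE exprn_gt0 // divr_gt0.
  rewrite lnXn ?divr_gt0 // -expRD ler_expR lnM ?posrE ?invr_gt0 // lnV ?posrE // lt lL.
  rewrite -mulr_natr.
  have h : 0 <= (q + 1) * ln lT * n%:R by rewrite !mulr_ge0 // ltW // addr_gt0.
  lra.
rewrite -!mulrA ler_wpM2l ?expR_ge0 // mulrA -/t expr_div_n ler_wpM2l ?exprn_ge0 ?(ltW t0) //.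
rewrite lef_pV2 ?posrE ?ltr0n ?exprn_gt0 ?fact_gt0 //.
by rewrite -natrX ler_nat fact_le_exp.
Qed.

Theorem lemma2p3 (R : realType) (d : nat) (alpha : R)
    (hd : (0 < d)%N) (halpha : d%:R < alpha)
    (T s : R) (hT : expR 1 < T) (hs : 0 < s)
    (z : 'I_d -> R) (k : {ffun 'I_d -> int})
    (hz : forall i, rT d alpha T * z i = (k i)%:~R) :
  expR (- (aT d alpha T * T * (qexp d alpha * l1 z + E1 d alpha T s (l1 z))))
    <= ctrw_prob (s * T) k.
Proof.
set n := (\sum_(i < d) `|k i|)%N.
have T0 : 0 < T by apply: lt_trans hT; rewrite expR_gt0.
have hl : 1 < ln T by rewrite -[X in X < _](expRK 1) ltr_ln ?posrE ?expR_gt0.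
have r0 : 0 < rT d alpha T by rewrite /rT powR_gt0 // divr_gt0 //; lra.
have hl1 : l1 z = n%:R / rT d alpha T.
  rewrite /l1 /n natr_sum mulr_suml; apply: eq_bigr => i _.
  have -> : z i = (k i)%:~R / rT d alpha T.
    by rewrite -hz; field; rewrite gt_eqF.
  rewrite normrM normfV (gtr0_norm r0) -intr_norm; congr (_ / _).
rewrite hl1.
move: (@main_ineq R d alpha T s n hd halpha hT hs) => /le_trans; apply.
have t0 : 0 <= s * T by rewrite mulr_ge0 // ltW.
apply: (le_trans _ (@ctrw_ge R d (s * T) k n t0)).
have hsr := @srw_lb R d k hd.
have hp : 0 < ((2 * d) ^ n)%:R :> R by rewrite ltr0n expn_gt0 muln_gt0 hd.
apply: le_trans (_ : _ <= expR (- (2 * d%:R * (s * T))) * (2 * d%:R * (s * T)) ^+ n / n`!%:R * ((2 * d) ^ n)%:R^-1) _.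
  rewrite le_eqVlt; apply/orP; left; apply/eqP.
  have h2 : (2 * d%:R : R) ^+ n != 0 by rewrite -natrM -natrX gt_eqF.
  rewrite [(2 * d%:R * (s * T)) ^+ n]exprMn natrX natrM.
  field.
  by rewrite h2 pnatr_eq0 -lt0n fact_gt0.
apply: ler_wpM2l => //.
by rewrite divr_ge0 ?mulr_ge0 ?expR_ge0 ?exprn_ge0 // mulr_ge0.
Qed.
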